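(* Let $V=I_F/I_F^2$ and let $R^{q}\subseteq V\otimes V$ be the kernel of the composite $m_K:V\otimes V\xrightarrow{m_F}I_F^2/I_F^3\twoheadrightarrow I_K^2/I_K^3$, where $m_F$ is the isomorphism induced by multiplication in $F$ and the second map is induced by the projection $F\to K$. Then $R^q\cong(M+I_F^3)/I_F^3\cong\partial_A(\mathbb{Q}Y_F)$, where $\partial_A(\mathbb{Q}Y_F)\subseteq\tilde X^2\cong I_F^2/I_F^3$.
   Context: Let $K$ be an augmented unital $\mathbb{Q}$-algebra generated by a set $X$, $F$ the free unital $\mathbb{Q}$-algebra on $X$, and $I_F\subseteq F$, $I_K\subseteq K$ the kernels of the algebra maps sending each $x\in X$ to $1$. Let $\tilde X=\mathbb{Q}\{x-1:x\in X\}$, so $F=T\tilde X=\bigoplus_p\tilde X^p$ and $I_F^p=\bigoplus_{q\ge p}\tilde X^q$. Let $M\subseteq I_F$ be a two-sided ideal with $K=F/M$. $K$ and $F$ are taken completed with respect to powers of their augmentation ideals, and $M\subseteq I_F^2$ is assumed (so $I_K/I_K^2\cong I_F/I_F^2$). Let $\{y_q:q\in Q\}\subseteq I_F^2$ generate $M$ as a two-sided ideal, $Y_F=\{Y_q\}$ symbols in bijection with them, and $\partial_A:\mathbb{Q}Y_F\to\tilde X^2$ the linear map sending $Y_q$ to the degree-2 component of $y_q$ (i.e. $y_q \bmod I_F^3$). *)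

(* Defs.v *)
From Stdlib Require List.
From mathcomp Require Import all_boot all_algebra.
Set Implicit Arguments. Unset Strict Implicit. Unset Printing Implicit Defensive.
Import GRing.Theory.
Local Open Scope ring_scope.

(* The completed free algebra F on X, written in the variables t_x = x - 1:
   an element is a noncommutative power series  sum_w f(w) t_w,  w a word
   over X; the degree-p homogeneous part lies in the tensor power
   tilde X^p, i.e. it has finite support (predicate [in_F]). *)
Definition series (X : Type) := seq X -> rat.

Definition in_F (X : Type) (f : series X) : Prop :=
  forall n : nat, exists s : seq (seq X),
    forall w : seq X, size w = n -> f w <> 0 -> Stdlib.Lists.List.In w s.

Definition in_IFp (X : Type) (p : nat) (f : series X) : Prop :=
  forall w : seq X, (size w < p)%N -> f w = 0.

Definition subF (X : Type) (f g : series X) : series X := fun w => f w - g w.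

Definition mulF (X : Type) (f g : series X) : series X :=
  fun w => \sum_(i < (size w).+1) f (take i w) * g (drop i w).

Definition ideal_gen_alg (X Q : Type) (y : Q -> series X) (f : series X) : Prop :=
  exists l : seq (series X * Q * series X),
    (forall u, Stdlib.Lists.List.In u l -> in_F u.1.1 /\ in_F u.2) /\
    forall w, f w = \sum_(u <- l) mulF (mulF u.1.1 (y u.1.2)) u.2 w.

(* M : the (closed) two-sided ideal of the completed algebra F generated by
   the y_q, i.e. the closure of the algebraic ideal in the I_F-adic topology *)
Definition ideal_M (X Q : Type) (y : Q -> series X) (f : series X) : Prop :=
  in_F f /\ forall n : nat, exists g, ideal_gen_alg y g /\
    forall w : seq X, (size w < n)%N -> f w = g w.

Definition in_M_IF3 (X Q : Type) (y : Q -> series X) (f : series X) : Prop :=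
  exists m, ideal_M y m /\ in_IFp 3 (subF f m).

(* V (x) V, with V = I_F/I_F^2 having basis the classes of t_x (x in X):
   a tensor sum_{a,b} t(a,b) t_a (x) t_b with finite support. *)
Definition tensorVV (X : Type) := X -> X -> rat.

Definition fin_supp (X : Type) (t : tensorVV X) : Prop :=
  exists s : seq X, forall a b, t a b <> 0 -> Stdlib.Lists.List.In a s /\ Stdlib.Lists.List.In b s.

(* m_F : V (x) V -> I_F^2/I_F^3, [t_a] (x) [t_b] |-> [t_a t_b]; we give the
   canonical lift in I_F^2 (the homogeneous degree-2 series). *)
Definition mF (X : Type) (t : tensorVV X) : series X :=
  fun w => match w with [:: a; b] => t a b | _ => 0 end.

(* R^q = ker (m_K) : the image of m_F t in K = F/M lies in I_K^3 = pi(I_F^3),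
   i.e. m_F t = g mod M for some g in I_F^3. *)
Definition in_Rq (X Q : Type) (y : Q -> series X) (t : tensorVV X) : Prop :=
  exists g : series X, in_F g /\ in_IFp 3 g /\ ideal_M y (subF (mF t) g).

(* degree-2 component (an element of tilde X^2 = I_F^2/I_F^3) *)
Definition deg2 (X : Type) (f : series X) : X -> X -> rat :=
  fun a b => f [:: a; b].

Definition partialA (X Q : Type) (y : Q -> series X) (c : seq (Q * rat)) :
  X -> X -> rat :=
  fun a b => \sum_(u <- c) u.2 * deg2 (y u.1) a b.

(* Main.v *)
Require Import Defs.
From mathcomp Require Import all_boot all_algebra.
From Stdlib Require Import FunctionalExtensionality.
Set Implicit Arguments.
Import GRing.Theory.
Local Open Scope ring_scope.

Section S.
Variables (X Q : Type) (y : Q -> series X).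
Hypothesis hy2 : forall q, in_IFp 2 (y q).

Lemma in_F_sub (f g : series X) : in_F f -> in_F g -> in_F (subF f g).
Proof.
move=> Hf Hg n; have [s1 H1] := Hf n; have [s2 H2] := Hg n.
exists (s1 ++ s2)%list => w Hw Hne; apply: List.in_or_app.
have [E|E] := eqVneq (f w) 0.
  right; apply: H2 => // Eg; apply: Hne; by rewrite /subF E Eg subr0.
by left; apply: H1 => //; apply/eqP.
Qed.

Lemma in_F_mF (t : tensorVV X) : fin_supp t -> in_F (mF t).
Proof.
case=> s Hs n.
exists (List.map (fun p => [:: p.1; p.2]) (List.list_prod s s)) => w _.
case: w => [|a [|b [|c w]]] //= Hne.
have [Ha Hb] := Hs a b Hne.
by apply: (List.in_map (fun p => [:: p.1; p.2]) _ (a, b)); apply: List.in_prod.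
Qed.

Lemma in_IFp_trans p (f g h : series X) :
  in_IFp p (subF f g) -> in_IFp p (subF g h) -> in_IFp p (subF f h).
Proof.
move=> H1 H2 w Hw; have := H1 w Hw; have := H2 w Hw; rewrite /subF => A B.
by rewrite -(subrK (g w) (f w)) B add0r -(subrK (h w) (g w)) A add0r subrr.
Qed.

Lemma mul_I2_l (f g : series X) : in_IFp 2 f -> in_IFp 2 (mulF f g).
Proof.
move=> Hf w Hw; rewrite /mulF big1 // => i _; rewrite Hf ?mul0r //.
by rewrite size_take; case: (ltnP i (size w)) => // h; apply: leq_ltn_trans Hw; apply: ltnW.
Qed.

Lemma mul_I2_r (f g : series X) : in_IFp 2 g -> in_IFp 2 (mulF f g).
Proof.
move=> Hg w Hw; rewrite /mulF big1 // => i _; rewrite Hg ?mulr0 //.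
by rewrite size_drop; apply: leq_ltn_trans Hw; apply: leq_subr.
Qed.

Lemma ideal_M_I2 m : ideal_M y m -> in_IFp 2 m.
Proof.
case=> _ H w Hw; have [g [[l [_ Hl]] Hg]] := H 2%N.
rewrite Hg // Hl big1 // => u _.
by apply: mul_I2_l => //; apply: mul_I2_r.
Qed.

Lemma deg2_prod (a b : series X) q x1 x2 :
  mulF (mulF a (y q)) b [:: x1; x2] = a [::] * y q [:: x1; x2] * b [::].
Proof.
rewrite /mulF /= !big_ord_recl !big_ord0 /=.
rewrite (hy2 q [:: x2]) // (hy2 q [::]) //.
idtac.
rewrite (hy2 q [:: x1]) //. rewrite !(mulr0, mul0r, addr0, add0r). done.
Qed.

Definition scal (k : rat) : series X := fun w => if size w == 0%N then k else 0.

Lemma mulF_scal_l k (g : series X) w : mulF (scal k) g w = k * g w.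
Proof.
rewrite /mulF big_ord_recl /= drop0 take0 /scal /= big1 ?addr0 // => i _.
have hw : (0 < size w)%N by apply: leq_ltn_trans (ltn_ord i).
have -> : (size (take (bump 0 i) w) == 0%N) = false.
  rewrite size_take; case: ifP => _ //.
  by move: hw; rewrite lt0n => /negbTE.
by rewrite mul0r.
Qed.

Lemma mulF_scal_r k (g : series X) w : mulF g (scal k) w = g w * k.
Proof.
rewrite /mulF big_ord_recr /= take_size drop_size /scal /= big1 ?add0r // => i _.
rewrite size_drop subn_eq0 leqNgt ltn_ord /= mulr0 //.
Qed.


Lemma in_F_addscale k (f g : series X) : in_F f -> in_F g -> in_F (fun w => k * f w + g w).
Proof.
move=> Hf Hg n; have [s1 H1] := Hf n; have [s2 H2] := Hg n.
exists (s1 ++ s2)%list => w Hw Hne; apply: List.in_or_app.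
have [E|E] := eqVneq (f w) 0.
  right; apply: H2 => // Eg; apply: Hne; by rewrite E Eg mulr0 addr0.
by left; apply: H1 => //; apply/eqP.
Qed.

Lemma in_F_lin (hyF : forall q, in_F (y q)) (c : seq (Q * rat)) :
  in_F (fun w => \sum_(u <- c) u.2 * y u.1 w).
Proof.
elim: c => [|u c IH].
  by move=> n; exists nil => w _; rewrite big_nil.
have := in_F_addscale u.2 (hyF u.1) IH.
by congr in_F; apply: functional_extensionality => w; rewrite big_cons.
Qed.

Lemma in_F_scal k : in_F (scal k).
Proof. move=> n; exists [:: [::]]%list => -[|a w] _ /=; first by left. by rewrite /scal. Qed.

End S.

Unset Implicit Arguments.

Theorem lemma3p3 (X Q : Type) (y : Q -> series X)
  (hyF : forall q, in_F (y q)) (hy2 : forall q, in_IFp 2 (y q)) :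
  (forall t : tensorVV X, fin_supp t -> (in_Rq y t <-> in_M_IF3 y (mF t)))
  /\
  (forall f : series X, in_F f ->
     (in_M_IF3 y f <->
      exists t : tensorVV X, fin_supp t /\ in_Rq y t /\ in_IFp 3 (subF f (mF t))))
  /\
  (forall f : series X, in_F f ->
     (in_M_IF3 y f <->
      in_IFp 2 f /\ exists c : seq (Q * rat), forall a b, deg2 f a b = partialA y c a b)).
Proof.
have P1 : forall t : tensorVV X, fin_supp t -> (in_Rq y t <-> in_M_IF3 y (mF t)).
  move=> t ht; split.
    case=> g [Fg [Ig Mg]]; exists (subF (mF t) g); split => //.
    have -> : subF (mF t) (subF (mF t) g) = g.
      by apply: functional_extensionality => w; rewrite /subF opprB addrC subrK.
    done.
  case=> m [Mm Im]; exists (subF (mF t) m); split; first exact: in_F_sub (in_F_mF ht) Mm.1.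
  split => //.
  have -> : subF (mF t) (subF (mF t) m) = m.
    by apply: functional_extensionality => w; rewrite /subF opprB addrC subrK.
  done.
have I2 : forall f, in_M_IF3 y f -> in_IFp 2 f.
  move=> f [m [Mm Im]] w Hw.
  have := Im w (ltn_trans Hw (ltnSn 2)); rewrite /subF (ideal_M_I2 hy2 Mm) // subr0.
  done.
split => //; split.
  move=> f Ff; split.
    move=> Hf; have If2 := I2 f Hf.
    set t : tensorVV X := fun a b => f [:: a; b].
    have ht : fin_supp t.
      have [s Hs] := Ff 2%N; exists (List.concat s) => a b Hne.
      have Hin := Hs [:: a; b] erefl Hne.
      by split; apply/List.in_concat; exists [:: a; b]; split => //=; auto.
    have D : in_IFp 3 (subF f (mF t)).
      move=> w Hw; rewrite /subF; case: w Hw => [|a [|b [|c w]]] //= _.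
      - by rewrite If2 // subrr.
      - by rewrite If2 // subrr.
      - by rewrite /t subrr.
    exists t; split => //; split => //; apply/P1 => //.
    case: Hf => m [Mm Im]; exists m; split => //.
    apply: in_IFp_trans Im => w Hw; have := D w Hw; rewrite /subF => E.
    by rewrite -opprB E oppr0.
  case=> t [ht [Rt Dt]]; have [m [Mm Im]] := (P1 t ht).1 Rt.
  by exists m; split => //; apply: in_IFp_trans Dt Im.
move=> f Ff; split.
  move=> Hf; split; first exact: I2 f Hf.
  case: Hf => m [Mm Im]; have [g [[l [_ Hl]] Hg]] := Mm.2 3%N.
  exists (map (fun u => (u.1.2, u.1.1 [::] * u.2 [::])) l) => a b.
  have E : f [:: a; b] = m [:: a; b].
    by have := Im [:: a; b] erefl; rewrite /subF => /eqP; rewrite subr_eq0 => /eqP.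
  rewrite /deg2 E Hg // Hl /partialA big_map; apply: eq_bigr => u _.
  by rewrite deg2_prod // /deg2 /= mulrAC.
case=> If2 [c Hc].
exists (fun w => \sum_(u <- c) u.2 * y u.1 w); split.
  split; first exact: in_F_lin.
  move=> n; exists (fun w => \sum_(u <- c) u.2 * y u.1 w); split => //.
  exists (map (fun u => (scal u.2, u.1, scal 1)) c); split.
    move=> u /List.in_map_iff [v [<- _]] /=; split; exact: in_F_scal.
  by move=> w; rewrite big_map; apply: eq_bigr => u _ /=; rewrite mulF_scal_r mulr1 mulF_scal_l.
move=> w Hw; rewrite /subF; case: w Hw => [|a [|b [|c' w]]] //= _.
- by rewrite If2 // big1 ?subrr // => u _; rewrite hy2 // mulr0.
- by rewrite If2 // big1 ?subrr // => u _; rewrite hy2 // mulr0.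
- by have := Hc a b; rewrite /deg2 /partialA /deg2 => ->; rewrite subrr.
Qed.
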